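(* Let $\varphi$ be a rational function of degree $n$ which is univalent on a neighborhood of $\overline{\mathbb D}$, let $\Omega:=\varphi(\mathbb D)$ and $\Gamma:=\partial\Omega=\varphi(\partial\mathbb D)$. For $t\in\widehat{\mathbb C}$ let $\{R(t)\}$ denote the collection $\{\varphi(1/\bar\zeta):\zeta\in\widehat{\mathbb C},\ \varphi(\zeta)=t\}$ (with $1/\bar 0=\infty$, $1/\bar\infty=0$), and let $B$ be the finite set of $t\in\widehat{\mathbb C}$ for which $\varphi(\zeta)=t$ has fewer than $n$ distinct solutions. Then: (i) if $t\in\widehat{\mathbb C}\setminus(\overline\Omega\cup B)$, then $\{R(t)\}\subset\Omega$; (ii) if $t\in\Gamma\setminus B$, then exactly one point of $\{R(t)\}$, namely $t$ itself, lies on $\Gamma$, and the remaining $n-1$ points lie in $\Omega$.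
   Context: $\mathbb D$ is the open unit disk. The degree of $\varphi=p/q$ ($p,q$ polynomials without common zeros) is $\max(\deg p,\deg q)$. $\{R(t)\}$ is the set of values at $t$ of the multivalued anticonformal reflection $R=\overline S$ of $\Gamma$, where the Schwarz function $S$ of $\Gamma$ satisfies $S(\varphi(\zeta))=\overline{\varphi(1/\bar\zeta)}$; in particular $R(\zeta)=\zeta$ on $\Gamma$ for the principal branch. *)

(* Defs.v *)
From HB Require Import structures.
From mathcomp Require Import all_boot all_order all_algebra.
From mathcomp Require Import all_classical all_reals all_analysis.
From mathcomp Require Export complex.
Export numFieldNormedType.Exports.
Set Implicit Arguments. Unset Strict Implicit. Unset Printing Implicit Defensive.
Import Order.TTheory GRing.Theory Num.Theory.
Local Open Scope ring_scope.
Local Open Scope classical_set_scope.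

(* The complex numbers, as a numClosedFieldType (so that the generic
   normed/topological structure of mathcomp-analysis applies). *)
Definition Cplx (R : rcfType) : numClosedFieldType := R[i].

(* The Riemann sphere: [Some z] is the finite point z, [None] is infinity. *)
Definition sphere (R : rcfType) := option (Cplx R).

(* Value of the rational function p/q at a point of the sphere
   (p, q assumed coprime and q != 0). *)
Definition rat_eval (R : rcfType) (p q : {poly (Cplx R)}) (z : sphere R) : sphere R :=
  match z with
  | Some z => if q.[z] == 0 then None else Some (p.[z] / q.[z])
  | None => if (size q < size p)%N then None
            else if size p == size q then Some (lead_coef p / lead_coef q)
            else Some 0
  end.

Definition rat_deg (R : rcfType) (p q : {poly (Cplx R)}) : nat :=
  (maxn (size p) (size q)).-1.

Definition sphere_refl (R : rcfType) (z : sphere R) : sphere R :=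
  match z with
  | Some z => if z == 0 then None else Some ((z^*)^-1)
  | None => Some 0
  end.

(* t is in the exceptional set B: phi(zeta) = t has fewer than n distinct
   solutions zeta in the sphere, i.e. there are no n distinct solutions. *)
Definition in_B (R : rcfType) (p q : {poly (Cplx R)}) (t : sphere R) : Prop :=
  ~ exists f : 'I_(rat_deg p q) -> sphere R,
      injective f /\ forall i, rat_eval p q (f i) = t.

Definition univalent_near_closed_disk (R : realType) (p q : {poly (Cplx R)}) : Prop :=
  exists U : set (Cplx R), open U /\ [set z | `|z| <= 1] `<=` U /\
    (forall z, U z -> q.[z] != 0) /\
    {in U &, injective (fun z => p.[z] / q.[z])}.

Definition Omega (R : realType) (p q : {poly (Cplx R)}) : set (Cplx R) :=
  [set p.[z] / q.[z] | z in [set z : (Cplx R) | `|z| < 1]].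

Definition Gamma (R : realType) (p q : {poly (Cplx R)}) : set (Cplx R) :=
  [set p.[z] / q.[z] | z in [set z : (Cplx R) | `|z| = 1]].

(* Main.v *)
Require Import Defs.
From mathcomp Require Import all_boot all_order all_algebra.
From mathcomp Require Import all_classical all_reals all_analysis.
From mathcomp Require Import complex.
Import Order.TTheory GRing.Theory Num.Theory numFieldNormedType.Exports.
Local Open Scope ring_scope.
Local Open Scope classical_set_scope.

Lemma horner_cvg (K : numFieldType) (p : {poly K}) (x : K) :
  horner p y @[y --> x] --> p.[x].
Proof.
elim/poly_ind: p => [|p c IH].
  rewrite horner0; have -> : horner (0:{poly K}) = cst 0.
    by apply/funext => y; rewrite horner0.
  apply: cvg_cst. exact: nbhs_filter.
have -> : horner (p * 'X + c%:P) = (fun y => p.[y] * y + c).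
  by apply/funext => y; rewrite !hornerE.
apply: cvgD; first exact: nbhs_filter.
  apply: cvgM; first exact: nbhs_filter.
    exact: IH.
  exact: cvg_id.
apply: cvg_cst; exact: nbhs_filter.
Qed.

Lemma rat_cvg (K : numFieldType) (p q : {poly K}) (x : K) : q.[x] != 0 ->
  (fun y => p.[y] / q.[y]) y @[y --> x] --> p.[x] / q.[x].
Proof.
move=> qx; apply: cvgM; first exact: nbhs_filter.
  exact: horner_cvg.
apply: cvgV; first exact: nbhs_filter.
  exact: qx.
exact: horner_cvg.
Qed.

Lemma small_pos (K : numFieldType) (e : K) : 0 < e ->
  exists r : K, [/\ 0 < r, r < e & r < 1].
Proof.
move=> e0; have e1 : 0 < 1 + e by rewrite addr_gt0.
exists (e / (1 + e)); split.
- by rewrite divr_gt0.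
- by rewrite ltr_pdivrMr // ltr_pMr // ltrDl.
- by rewrite ltr_pdivrMr // mul1r ltrDr.
Qed.

Lemma closure_img (R : realType) (p q : {poly (Cplx R)}) (U : set (Cplx R)) :
  (forall z, U z -> q.[z] != 0) -> [set z | `|z| <= 1] `<=` U ->
  forall z : Cplx R, `|z| <= 1 -> closure (Omega p q) (p.[z] / q.[z]).
Proof.
move=> qU sU z z1 B nB.
have qz : q.[z] != 0 by apply: qU; apply: sU.
have := @rat_cvg _ p q z qz => /(_ _ nB) /= /nbhs_ballP [e /= e0 he].
have [r [r0 re r1]] := @small_pos _ e e0.
set w := (1 - r) * z.
have r1' : 0 <= 1 - r by rewrite subr_ge0 ltW.
exists (p.[w] / q.[w]); split.
  exists w => //=.
  rewrite /w normrM (ger0_norm r1').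
  apply: (le_lt_trans (y := 1 - r)).
    by rewrite -[leRHS]mulr1 ler_wpM2l.
  by rewrite ltrBlDr ltrDl.
apply: he; rewrite /ball_ /=.
have -> : z - w = r * z by rewrite /w mulrBl mul1r opprB addrC subrK.
rewrite normrM (gtr0_norm r0).
apply: (le_lt_trans (y := r)) => //.
by rewrite -[leRHS]mulr1 ler_wpM2l // ltW.
Qed.

Lemma refl_out (R : realType) (zeta : sphere R) :
  (zeta = None \/ exists z, zeta = Some z /\ 1 < `|z|) ->
  exists u : Cplx R, `|u| < 1 /\ sphere_refl zeta = Some u.
Proof.
case=> [->|[z [-> z1]]]; first by exists 0; rewrite normr0 ltr01.
have zn0 : z != 0 by apply: contraTneq z1 => ->; rewrite normr0 (lt_gtF ltr01).
exists ((z^*)^-1); split; last by rewrite /= (negbTE zn0).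
by rewrite normfV norm_conjC invf_lt1 // (lt_trans ltr01 z1).
Qed.

Theorem lemma3p12 (R : realType) (p q : {poly (Cplx R)}) :
  q != 0 -> coprimep p q ->
  univalent_near_closed_disk p q ->
  (* (i) *)
  (forall t : sphere R,
      ~ (exists t', t = Some t' /\ closure (Omega p q) t') ->
      ~ in_B p q t ->
      forall zeta : sphere R, rat_eval p q zeta = t ->
        exists w, rat_eval p q (sphere_refl zeta) = Some w /\ Omega p q w)
  /\
  (* (ii) *)
  (forall t : Cplx R, Gamma p q t -> ~ in_B p q (Some t) ->
      exists zeta0 : sphere R,
        [/\ rat_eval p q zeta0 = Some t,
            rat_eval p q (sphere_refl zeta0) = Some t &
            forall zeta : sphere R, rat_eval p q zeta = Some t -> zeta <> zeta0 ->
              exists w, [/\ rat_eval p q (sphere_refl zeta) = Some w,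
                            Omega p q w & ~ Gamma p q w]]).
Proof.
move=> qn0 _ [U [oU [sU [qU inj]]]].
have evalin : forall z, `|z| <= 1 -> rat_eval p q (Some z) = Some (p.[z]/q.[z]).
  by move=> z hz; rewrite /= (negbTE (qU _ (sU _ hz))).
have evalS : forall z t, rat_eval p q (Some z) = Some t -> p.[z]/q.[z] = t.
  by move=> z t /=; case: eqP => // _ [].
have key : forall zeta : sphere R,
    (zeta = None \/ exists z, zeta = Some z /\ 1 < `|z|) ->
    exists w, [/\ rat_eval p q (sphere_refl zeta) = Some w,
                  Omega p q w & ~ Gamma p q w].
  move=> zeta /refl_out [u [hu ->]].
  exists (p.[u]/q.[u]); split.
  - by rewrite evalin // ltW.
  - by exists u.
  - case=> v /= hv e.
    have hv1 : `|v| <= 1 by rewrite hv.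
    have := inj v u (mem_set (sU _ hv1)) (mem_set (sU _ (ltW hu))) e.
    by move=> evu; move: hu; rewrite -evu hv ltxx.
have dich : forall z : Cplx R, `|z| <= 1 \/ 1 < `|z|.
  by move=> z; have [h|h] := real_leP (normr_real z) (@real1 _); [left|right].
split.
  move=> t nt _ [z|] ez; last first.
    by have [w [h1 h2 _]] := key None (or_introl erefl); exists w.
  case: (dich z) => hz.
    exfalso; apply: nt; exists (p.[z]/q.[z]); rewrite -ez evalin //; split => //.
    exact: (@closure_img R p q U qU sU z hz).
  have [w [h1 h2 _]] := key (Some z) (or_intror (ex_intro _ z (conj erefl hz))).
  by exists w.
move=> t [z0 /= hz0 <-] _.
have hz01 : `|z0| <= 1 by rewrite hz0.
exists (Some z0); split.
- exact: evalin.
- have zn0 : z0 != 0 by apply/eqP => z00; move: hz0; rewrite z00 normr0 => /eqP; rewrite eq_sym oner_eq0.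
  have h : z0^* * z0 = 1 by rewrite -normCKC hz0 expr1n.
  by rewrite /= (negbTE zn0) (mulr1_eq h) evalin.
- move=> [z|] ez neq; last exact: key (or_introl erefl).
  case: (dich z) => hz; last first.
    exact: key (or_intror (ex_intro _ z (conj erefl hz))).
  exfalso; apply: neq; congr Some.
  apply: inj; [exact: mem_set (sU _ hz) | exact: mem_set (sU _ hz01) |].
  by rewrite (evalS _ _ ez).
Qed.
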